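(* Let $Q$ be a quadrangulation with a strong labeling $\phi$, and let $X$ be the $2$-orientation induced by $\phi$. Let $C$ be a directed cycle in $X$ and let $X_C$ be the $2$-orientation obtained from $X$ by reversing all edges of $C$. Then the strong labeling corresponding to $X_C$ is obtained from $\phi$ by complementing (replacing $\ell$ by $1-\ell$) the labels of all angles lying inside $C$, and leaving all other labels unchanged.
   Context: A quadrangulation is a simple plane graph with at least four vertices all of whose faces (including the outer face) are bounded by $4$-cycles; it is bipartite, with vertices properly colored black and white. An angle is an incidence of a vertex with a face; an angle lies inside $C$ if its face lies in the interior of $C$. A strong labeling of $Q$ is a map from the angles of $Q$ to $\{0,1\}$ such that: (G0) the two black vertices on the outer face are named $s_0$ and $s_1$, and all angles at $s_i$ are labeled $i$; (G1) for each vertex $v\notin\{s_0,s_1\}$ the labels around $v$ form one non-empty cyclic interval of $1$s and one non-empty cyclic interval of $0$s; (G2) for each edge, the two labels on the two sides of the edge coincide at one endpoint and differ at the other; (G3) the labels in each bounded face, read cyclically, are $0,0,1,1$, and reading the labels of the outer face in clockwise order starting at $s_0$ they are $0,0,1,1$. A strong labeling induces an orientation of the edges: each edge is oriented towards the endpoint at which its two labels coincide; this is a $2$-orientation, i.e. every vertex other than $s_0,s_1$ has outdegree exactly $2$. The map sending a strong labeling to its induced $2$-orientation is a bijection between strong labelings of $Q$ (with $s_0$ fixed) and $2$-orientations of $Q$; ''the strong labeling corresponding to'' a $2$-orientation refers to this bijection. *)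

(* Defs.v *)
From mathcomp Require Import all_boot all_fingroup.
Set Implicit Arguments. Unset Strict Implicit. Unset Printing Implicit Defensive.

Section Maps.
Variables (V D : finType) (alpha sigma : {perm D}) (tail : D -> V).

(* Darts: each dart d is an edge-end, going out of vertex [tail d].
   [alpha] = the other dart of the same edge; [sigma d] = next dart
   counterclockwise around [tail d]. *)
Definition head (d : D) : V := tail (alpha d).

(* Face permutation: the face traversal u->v->w where vw follows vu
   counterclockwise around v; faces lie to the right of their traversal,
   so bounded faces are traversed clockwise, the outer face counterclockwise. *)
Definition phi (d : D) : D := sigma (alpha d).
Definition phiinv (d : D) : D := alpha ((sigma^-1)%g d).

(* Angles = corners: dart d represents the angle at vertex [tail d]
   between [(sigma^-1) d] and [d]; it lies in the face (phi-orbit) of d. *)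

Definition plane_quadrangulation : Prop :=
  [/\
      [/\ (forall d, alpha (alpha d) = d /\ alpha d != d),
          (forall d, tail (sigma d) = tail d),
          (forall d d', tail d = tail d' -> fconnect sigma d d') &
          (forall v, exists d, tail d = v)],
      (forall d, head d != tail d) /\
      (forall d d', tail d = tail d' -> head d = head d' -> d = d'),
      (forall d d', connect (fun x y => (y == sigma x) || (y == alpha x)) d d'),
      (* Euler's formula V - E + F = 2 (with E = #|D|/2): genus 0, i.e. plane *)
      ((#|V| + fcard phi D) * 2 = #|D| + 4)%N &
      (forall d, fingraph.order phi d = 4 /\ uniq (map tail (fingraph.orbit phi d))) /\
      (4 <= #|V|)%N ].

Definition proper_bicoloring (black : V -> bool) : Prop :=
  forall d, black (head d) != black (tail d).

(* [o] is a dart of the outer face. *)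
Definition on_face (o : D) (v : V) : bool := [exists e, fconnect phi o e && (tail e == v)].

(* labels: true = 1, false = 0 *)
Definition strong_labeling (black : V -> bool) (o : D) (s0 s1 : V) (lab : D -> bool) : Prop :=
  [/\ [/\ s0 != s1, black s0, black s1, on_face o s0 & on_face o s1],
      (forall d, tail d = s0 -> lab d = false) /\ (forall d, tail d = s1 -> lab d = true),
      (forall v, v != s0 -> v != s1 -> exists d, tail d = v /\
          exists a b, [/\ (0 < a)%N, (0 < b)%N &
                       map lab (fingraph.orbit sigma d) = nseq a true ++ nseq b false]),
      (forall d, (lab d == lab (sigma d)) != (lab (alpha d) == lab (sigma (alpha d)))) &
      (forall d, ~~ fconnect phi o d -> exists e, fconnect phi d e /\
          map lab (fingraph.orbit phi e) = [:: false; false; true; true]) /\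
      (forall e, fconnect phi o e -> tail e = s0 ->
          map lab (fingraph.orbit phiinv e) = [:: false; false; true; true]) ].

(* Induced orientation: [orient lab d] iff the edge of d is oriented from
   [tail d] to [head d], i.e. the two labels at [head d] coincide. *)
Definition orient (lab : D -> bool) (d : D) : bool :=
  lab (alpha d) == lab (sigma (alpha d)).

Definition directed_cycle (X : D -> bool) (c : seq D) : Prop :=
  [/\ (3 <= size c)%N, uniq (map tail c), all X c &
      path.cycle (fun d d' => head d == tail d') c].

Definition reverse_on (X : D -> bool) (c : seq D) (d : D) : bool :=
  if d \in c then false else if alpha d \in c then true else X d.

(* adjacency of angles not crossing C: along a face, or across an edge not in C *)
Definition region_adj (c : seq D) (x y : D) : bool :=
  [|| y == phi x, x == phi y | [&& y == alpha x, x \notin c & y \notin c]].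

Definition inside (o : D) (c : seq D) (d : D) : bool := ~~ connect (region_adj c) d o.

Definition complement_inside (o : D) (c : seq D) (lab : D -> bool) (d : D) : bool :=
  if inside o c d then ~~ lab d else lab d.

End Maps.

(* Main.v *)
Require Import Defs.
From HB Require Import structures.
From mathcomp Require Import all_boot all_fingroup all_algebra.
From mathcomp Require Import zify.
Set Implicit Arguments. Unset Strict Implicit. Unset Printing Implicit Defensive.
Import GRing.Theory.


Lemma F2_cases (x : 'F_2) : x = 0%R \/ x = 1%R.
Proof. by case: x => [[|[|//]]] H; [left|right]; apply/val_inj. Qed.

Lemma F2_add_self (x : 'F_2) : (x + x = 0)%R.
Proof. by case: (F2_cases x) => ->; apply/val_inj. Qed.

Lemma F2_natr (n : nat) : ((n%:R : 'F_2) = (odd n)%:R)%R.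
Proof.
elim: n => [//|n IH]; rewrite -[n.+1]addn1 GRing.natrD IH oddD /=.
by case: (odd n); apply/val_inj.
Qed.

Section LA.
Variables (V D : finType) (alpha sigma : {perm D}) (tail : D -> V).
Hypothesis alphaK : forall d, alpha (alpha d) = d.
Hypothesis alpha_neq : forall d, alpha d != d.
Hypothesis tail_sigma : forall d, tail (sigma d) = tail d.
Hypothesis tail_surj : forall v, exists d, tail d = v.
Hypothesis conn : forall d d', connect (fun x y => (y == sigma x) || (y == alpha x)) d d'.
Hypothesis euler : ((#|V| + fcard (phi alpha sigma) D) * 2 = #|D| + 4)%N.

Local Notation ph := (phi alpha sigma).

Lemma ph_inj : injective ph.
Proof. by move=> x y; rewrite /phi => /perm_inj /perm_inj. Qed.

Lemma symph : connect_sym (frel ph).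
Proof. exact: fconnect_sym ph_inj. Qed.
Lemma symal : connect_sym (frel alpha).
Proof. exact: fconnect_sym (@perm_inj _ alpha). Qed.

Definition FR := {x : D | froot ph x == x}.
Definition ER := {x : D | froot alpha x == x}.
Definition fR (d : D) : FR := exist _ (froot ph d) (roots_root symph d).
Definition eR (d : D) : ER := exist _ (froot alpha d) (roots_root symal d).

Lemma alpha_orbit d y : fconnect alpha d y -> y = d \/ y = alpha d.
Proof.
case/connectP=> p; elim: p d => [|x p IH] d /=; first by move=> _ ->; left.
case/andP=> /eqP <- Hp Hy; case: (IH _ Hp Hy) => ->; [right|left] => //.
Qed.

Lemma eR_cases d : val (eR d) = d \/ val (eR d) = alpha d.
Proof. exact: alpha_orbit (connect_root _ _). Qed.

Lemma eR_alpha d : eR (alpha d) = eR d.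
Proof. by apply/val_inj => /=; move: (fconnect1 alpha d) => /(fingraph.rootP symal) ->. Qed.

Lemma fR_ph d : fR (ph d) = fR d.
Proof. by apply/val_inj => /=; move: (fconnect1 ph d) => /(fingraph.rootP symph) ->. Qed.

Lemma fR_val (r : FR) : fR (val r) = r.
Proof. by apply/val_inj; case: r => x /= /eqP. Qed.
Lemma eR_val (r : ER) : eR (val r) = r.
Proof. by apply/val_inj; case: r => x /= /eqP. Qed.


Definition F2 := ('F_2)^o.

Definition Tf (h : {ffun FR -> F2}) : {ffun ER -> F2} :=
  [ffun r => (h (fR (val r)) + h (fR (alpha (val r))))%R].
Definition Psif (z : {ffun ER -> F2}) : {ffun V -> F2} :=
  [ffun v => (\sum_(d | tail d == v) z (eR d))%R].

Lemma Tf_lin : linear Tf.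
Proof.
move=> a u v; apply/ffunP => r; rewrite !ffunE.
by rewrite GRing.scalerDr GRing.addrACA.
Qed.

Lemma Psif_lin : linear Psif.
Proof.
move=> a u v; apply/ffunP => w; rewrite !ffunE.
rewrite GRing.scaler_sumr -big_split /=; apply: eq_bigr => d _.
by rewrite !ffunE.
Qed.

Lemma card_FR : #|{: FR}| = fcard ph D.
Proof. by rewrite card_sig /n_comp_mem; apply: eq_card => x; rewrite !inE andbT. Qed.
Lemma card_ER : #|{: ER}| = fcard alpha D.
Proof. by rewrite card_sig /n_comp_mem; apply: eq_card => x; rewrite !inE andbT. Qed.

Lemma fconnect_alpha x : fconnect alpha x =i pred2 x (alpha x).
Proof.
move=> y; rewrite !inE; apply/idP/idP.
  by case/alpha_orbit => ->; rewrite eqxx ?orbT.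
by case/orP => /eqP ->; [exact: connect0 | exact: fconnect1].
Qed.

Lemma fconnect_alpha' x y : fconnect alpha x y = (y == x) || (y == alpha x).
Proof. exact: (fconnect_alpha x y). Qed.

Lemma card_D : #|D| = (2 * fcard alpha D)%N.
Proof.
rewrite mulnC fcard_order_set //; first exact: perm_inj.
  apply/subsetP => x _; rewrite inE; apply/eqP.
  rewrite /fingraph.order (@eq_card _ _ (pred2 x (alpha x))) ?card2 ?(eq_sym x) ?alpha_neq //.
  exact: fconnect_alpha.
Qed.

Lemma dim_ffun (I : finType) : \dim {:{ffun I -> F2}} = #|I|.
Proof. by rewrite dimvf /dim /= muln1. Qed.

Lemma sum_delta (P : pred D) (x : D) (c : F2) :
  (\sum_(d | P d) (if d == x then c else 0) = if P x then c else 0)%R.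
Proof.
case Px: (P x).
  rewrite (bigD1 x) //= eqxx big1 ?GRing.addr0 // => d /andP[_ /negbTE ->] //.
by rewrite big1 // => d Pd; case: eqP => // Edx; rewrite -Edx Pd in Px.
Qed.

Lemma potential (z : D -> bool) :
  (forall d, z (alpha d) = z d) ->
  (forall v, ~~ odd #|[pred d | (tail d == v) && z d]|) ->
  exists P : D -> bool, (forall d, P (ph d) = P d) /\ (forall d, P (alpha d) = P d (+) z d).
Proof.
move=> zA zE.
have [TT TTE] : exists TT : 'Hom({ffun FR -> F2}, {ffun ER -> F2}), forall h, TT h = Tf h.
  pose TL : {linear _ -> _} := HB.pack Tf (GRing.isLinear.Build _ _ _ _ Tf Tf_lin).
  by exists (linfun TL) => h; rewrite (lfunE TL).
have [PP PPE] : exists PP : 'Hom({ffun ER -> F2}, {ffun V -> F2}), forall h, PP h = Psif h.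
  pose PL : {linear _ -> _} := HB.pack Psif (GRing.isLinear.Build _ _ _ _ Psif Psif_lin).
  by exists (linfun PL) => h; rewrite (lfunE PL).
pose zf : {ffun ER -> F2} := [ffun r => ((z (val r))%:R)%R].
have fRa d : fR (alpha d) = fR (sigma d).
  by rewrite -fR_ph /phi alphaK.
have zf_ker : zf \in lker PP.
  rewrite memv_ker PPE; apply/eqP/ffunP => v; rewrite !ffunE.
  have -> : (\sum_(d | tail d == v) zf (eR d) = \sum_(d | tail d == v) (if z d then 1 else 0))%R.
    apply: eq_bigr => d _; rewrite ffunE.
    by case: (eR_cases d) => ->; rewrite ?zA; case: (z d).
  rewrite -big_mkcondr /= GRing.sumr_const F2_natr.
  move: (zE v); rewrite (@eq_card _ _ [pred d | (tail d == v) && z d]) //.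
  by move/negbTE => ->.
have img_ker : (limg TT <= lker PP)%VS.
  apply/subvP => w /memv_imgP [h _ ->]; rewrite memv_ker PPE TTE.
  apply/eqP/ffunP => v; rewrite !ffunE.
  have -> : (\sum_(d | tail d == v) Tf h (eR d) =
             \sum_(d | tail d == v) h (fR d) + \sum_(d | tail d == v) h (fR (sigma d)))%R.
    rewrite -big_split; apply: eq_bigr => d _ /=; rewrite ffunE.
    by case: (eR_cases d) => ->; rewrite ?alphaK fRa // GRing.addrC.
  rewrite [X in (X + _)%R](reindex_inj (@perm_inj _ sigma)) /=.
  rewrite [X in (X + _)%R](eq_bigl (fun d => tail d == v)) ?F2_add_self // => d.
  by rewrite tail_sigma.
have ker_T : (\dim (lker TT) <= 1)%N.
  case: (pickP (fun _ : FR => true)) => [r0 _ | none].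
    have: (lker TT <= <[[ffun _ => 1%R] : {ffun FR -> F2}]>)%VS.
      apply/subvP => h; rewrite memv_ker TTE => /eqP hT.
      have hA d : h (fR (alpha d)) = h (fR d).
        move: (congr1 (fun f : {ffun ER -> F2} => f (eR d)) hT); rewrite !ffunE.
        case: (eR_cases d) => ->; rewrite ?alphaK;
        case: (F2_cases (h (fR d))) => ->; case: (F2_cases (h (fR (alpha d)))) => -> //= H;
        by move: H => /(congr1 val).
      have hc d d' : h (fR d) = h (fR d').
        move: (conn d d') => /connectP [p].
        elim: p d => [|x p IH] y /=; first by move=> _ ->.
        case/andP => /orP [] /eqP Ex Hp Hl; rewrite -(IH _ Hp Hl) Ex ?hA //.
        by rewrite -fRa hA.
      apply/vlineP; exists (h r0); apply/ffunP => r; rewrite !ffunE /GRing.scale /= GRing.mulr1.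
      by have := hc (val r) (val r0); rewrite !fR_val.
    by move/dimvS; rewrite dim_vline; case: (_ != _) => // /leqW.
  suff -> : lker TT = 0%VS by rewrite dimv0.
  apply/vspaceP => h; rewrite memv0 memv_ker; apply/idP/idP => [_|/eqP ->]; last by rewrite GRing.linear0.
  by apply/eqP/ffunP => r; move: (none r).
have dimT := limg_ker_dim TT fullv.
rewrite capfv dim_ffun card_FR in dimT.
have dimP := limg_ker_dim PP fullv.
rewrite capfv dim_ffun card_ER in dimP.
have img_P : (#|V| <= \dim (limg PP) + 1)%N.
  case: (pickP (fun _ : V => true)) => [v0 _ | none]; last first.
    by rewrite (eq_card0 none).
  pose e (v : V) : {ffun V -> F2} := [ffun w => if w == v then 1%R else 0%R].
  have [d0 _] := tail_surj v0.
  pose U := (limg PP + <[e (tail d0)]>)%VS.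
  have eU d : e (tail d) \in U.
    have e0 : e (tail d0) \in U.
      by rewrite -[e _]GRing.add0r; apply: memv_add; [exact: mem0v | exact: memv_line].
    suff step : forall p y, e (tail y) \in U ->
        path (fun x y => (y == sigma x) || (y == alpha x)) y p -> d = last y p -> e (tail d) \in U.
      by move: (conn d0 d) => /connectP [p Hp Hl]; exact: step e0 Hp Hl.
    elim => [|x p IH] y ey /=; first by move=> _ ->.
    case/andP => /orP [] /eqP Ex Hp Hl; apply: (IH x) => //; rewrite Ex //.
      by rewrite tail_sigma.
    pose dl : {ffun ER -> F2} := [ffun r => if r == eR y then 1%R else 0%R].
    have -> : e (tail (alpha y)) = (PP dl - e (tail y))%R.
      apply/ffunP => w; rewrite !ffunE PPE !ffunE.
      have -> : (\sum_(d' | tail d' == w) dl (eR d') =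
           \sum_(d' | tail d' == w) ((if d' == y then 1 else 0) + (if d' == alpha y then 1 else 0)))%R.
        apply: eq_bigr => d' _; rewrite ffunE.
        have -> : (eR d' == eR y) = fconnect alpha y d'.
          by rewrite -(root_connect symal) eq_sym -(inj_eq val_inj).
        rewrite fconnect_alpha'.
        case: (d' =P y) => [->|_]; first by rewrite /= eq_sym (negbTE (alpha_neq y)) GRing.addr0.
        by case: (d' == alpha y); rewrite ?GRing.add0r.
      rewrite big_split /= !sum_delta !(eq_sym w).
      by case: (tail y == w); case: (tail (alpha y) == w); apply/val_inj.
    apply: memvB => //; rewrite -[PP dl]GRing.addr0; apply: memv_add; last exact: mem0v.
    by apply: memv_img; exact: memvf.
  have fU : (fullv <= U)%VS.
    apply/subvP => f _.
    have -> : f = (\sum_v f v *: e v)%R.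
      apply/ffunP => w; rewrite sum_ffunE.
      rewrite (bigD1 w) //= big1 => [|v /negbTE nv]; rewrite !ffunE.
      - by rewrite eqxx GRing.addr0 /GRing.scale /= GRing.mulr1.
      - by rewrite eq_sym nv GRing.scaler0.
    apply: memv_suml => v _; apply: memvZ; have [d <-] := tail_surj v; exact: eU.
  move/dimvS: fU; rewrite dim_ffun => /leq_trans; apply.
  apply: leq_trans (dimv_add_leqif _ _) _; rewrite leq_add2l dim_vline.
  by case: (_ != _).
have eqTP : limg TT = lker PP.
  apply/eqP; rewrite eqEdim img_ker /=.
  move: euler; rewrite card_D => eu.
  set kT := \dim (lker TT) in ker_T dimT *. set iT := \dim (limg TT) in dimT *.
  set kP := \dim (lker PP) in dimP *. set iP := \dim (limg PP) in dimP img_P *.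
  lia.
move: zf_ker; rewrite -eqTP => /memv_imgP [h _ hz].
exists (fun d => h (fR d) != 0%R); split => [d|d]; first by rewrite fR_ph.
move: (congr1 (fun f : {ffun ER -> F2} => f (eR d)) hz); rewrite TTE !ffunE.
case: (eR_cases d) => ->; rewrite ?alphaK ?zA.
  case: (F2_cases (h (fR d))) => ->; case: (F2_cases (h (fR (alpha d)))) => ->;
    case: (z d) => //= H; by move: H => /(congr1 val).
case: (F2_cases (h (fR d))) => ->; case: (F2_cases (h (fR (alpha d)))) => ->;
  case: (z d) => //= H; by move: H => /(congr1 val).
Qed.

End LA.


Lemma connect_to (T : finType) (e : rel T) (Q : T -> T -> Prop) :
  (forall x, Q x x) -> (forall x y z, e x y -> Q y z -> Q x z) ->
  forall x y, connect e x y -> Q x y.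
Proof.
move=> Qr Qs x y /connectP [p]; elim: p x => [|a p IH] x /=; first by move=> _ ->.
by case/andP => exa Hp Hl; apply: Qs exa (IH _ Hp Hl).
Qed.

Section Orb.
Variables (D : finType) (s : {perm D}) (g : D -> bool).

Local Notation ord := (fingraph.order s).
Local Notation fidx := (fingraph.findex s).

Definition trans y := g y != g (s y).

Lemma iter_pred_order x : iter (ord x).-1 s x = (s^-1)%g x.
Proof.
apply: (@perm_inj _ s); rewrite permKV -iterS orderSpred.
exact: (iter_order (@perm_inj _ s)).
Qed.

Lemma fidx_inv x : fidx x ((s^-1)%g x) = (ord x).-1.
Proof. by rewrite -iter_pred_order findex_iter // orderSpred. Qed.

Lemma fconnect_s x y : fconnect s (s x) y = fconnect s x y.
Proof. by have H := same_fconnect1 (@perm_inj _ s) x y; rewrite H. Qed.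

Lemma walk a b : fconnect s a b ->
  (forall y, fconnect s a y -> trans y -> y = a \/ y = b) -> g (s a) = g b.
Proof.
move=> ab htr; have sab : fconnect s (s a) b by rewrite fconnect_s.
set m := fidx (s a) b.
have mlt : m < ord (s a) by exact: findex_max.
have posa : fidx (s a) a = (ord (s a)).-1.
  by rewrite -{2}[a](permK s) fidx_inv.
suff H : forall j, j <= m -> g (iter j s (s a)) = g (s a).
  by rewrite -(H m) // iter_findex.
elim => [//|j IH] Hj; rewrite iterS.
have Hj' : j < ord (s a) by lia.
have ny : iter j s (s a) != a.
  apply/eqP => E; move: (findex_iter Hj'); rewrite E posa; lia.
have nb : iter j s (s a) != b.
  apply/eqP => E; move: (findex_iter Hj'); rewrite E -/m; lia.
have : ~~ trans (iter j s (s a)).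
  apply/negP => /htr []; first by rewrite -fconnect_s; exact: fconnect_iter.
    by move/eqP; rewrite (negbTE ny).
  by move/eqP; rewrite (negbTE nb).
by rewrite /trans negbK => /eqP <-; apply: IH; lia.
Qed.

Definition blockf (d : D) := exists a b, [/\ 0 < a, 0 < b &
  map g (fingraph.orbit s d) = nseq a true ++ nseq b false]%N.

Lemma build x y1 y2 : fconnect s x y1 -> fconnect s x y2 -> y1 != y2 ->
  trans y1 -> trans y2 ->
  (forall y, fconnect s x y -> trans y -> y = y1 \/ y = y2) ->
  exists d, fconnect s x d /\ blockf d.
Proof.
move=> xy1 xy2 n12 t1 t2 htr.
have sym := fconnect_sym (@perm_inj _ s).
have y12 : fconnect s y1 y2 by rewrite sym in xy1; exact: connect_trans xy1 xy2.
have y21 : fconnect s y2 y1 by rewrite sym.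
have in1 y : fconnect s y1 y -> fconnect s x y by apply: connect_trans.
have in2 y : fconnect s y2 y -> fconnect s x y by apply: connect_trans.
have w1 := walk y12 (fun y h t => match htr y (in1 y h) t with or_introl e => or_introl e | or_intror e => or_intror e end).
have w2 : g (s y2) = g y1.
  apply: walk y21 _ => y h t; case: (htr y (in2 y h) t) => ->; by [right|left].
suff main : forall z1 z2, fconnect s x z1 -> fconnect s x z2 -> z1 != z2 ->
    g (s z1) = g z2 -> g (s z2) = g z1 -> g z2 = false -> g z1 = true ->
    (forall y, fconnect s x y -> trans y -> y = z1 \/ y = z2) ->
    exists d, fconnect s x d /\ blockf d.
  move: t1; rewrite /trans w1 => t1.
  case E2: (g y2).
    have E1 : g y1 = false by move: t1; rewrite E2; case: (g y1).
    apply: (main y2 y1) => //; first by rewrite eq_sym.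
    by move=> y h t; case: (htr y h t); [right|left].
  have E1 : g y1 = true by move: t1; rewrite E2; case: (g y1).
  exact: (main y1 y2).
move=> z1 z2 xz1 xz2 n12' e1 e2 g2 g1 htr'.
set d := s z2.
have xd : fconnect s x d by rewrite /d; apply: connect_trans xz2 (fconnect1 _ _).
exists d; split => //.
set n := ord d.
have dz2 : iter n.-1 s d = z2 by rewrite iter_pred_order /d permK.
have dz1 : fconnect s d z1.
  by rewrite sym in xd; exact: connect_trans xd xz1.
set a1 := fidx d z1.
have a1lt : a1 < n by exact: findex_max.
have a1ne : a1 != n.-1.
  apply/eqP => E; move: (iter_findex dz1); rewrite -/a1 E dz2 => E2.
  by rewrite E2 eqxx in n12'.
have npos : 0 < n by exact: fingraph.order_gt0.
have Hlt : a1.+1 < n by clear -a1lt a1ne npos; lia.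
have Hg : forall k, k < n -> g (iter k s d) = (k < a1.+1).
  elim => [|k IH] Hk; first by rewrite /= /d e2 g1.
  rewrite iterS.
  have Hk' : k < n by apply: ltnW.
  case: (k =P a1) => [Ek|Nk].
    have : iter k s d = z1 by rewrite Ek iter_findex.
    by move=> ->; rewrite e1 g2 Ek ltnn.
  have nt : ~~ trans (iter k s d).
    apply/negP => /htr' [].
      * by apply: connect_trans xd _; exact: fconnect_iter.
      * move=> E; apply: Nk; rewrite /a1 -E findex_iter //.
      * move=> E; move: (findex_iter Hk'); rewrite E -dz2 findex_iter ?orderSpred //.
        by clear -Hk; lia.
  move: nt; rewrite /trans negbK => /eqP <-; rewrite IH //.
  by clear -Nk; lia.
exists a1.+1, (n - a1.+1); split => //; first by clear -Hlt; lia.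
apply: (@eq_from_nth _ false).
  by rewrite size_map size_cat !size_nseq /fingraph.orbit size_traject; clear -Hlt; lia.
move=> k; rewrite size_map /fingraph.orbit size_traject => Hk.
rewrite (nth_map d) ?size_traject // nth_traject // Hg // nth_cat size_nseq.
case: ifP => H; first by rewrite nth_nseq H.
by rewrite nth_nseq; case: ifP => //; clear -H Hk; lia.
Qed.

Lemma extract d : blockf d -> exists y1 y2,
  [/\ fconnect s d y1, fconnect s d y2, y1 != y2, trans y1 & trans y2] /\
      forall y, fconnect s d y -> trans y -> y = y1 \/ y = y2.
Proof.
case=> a [b [apos bpos E]].
set n := ord d.
have nE : n = (a + b)%N.
  by move: (congr1 size E); rewrite size_map size_cat !size_nseq /fingraph.orbit size_traject.
have Hg : forall k, k < n -> g (iter k s d) = (k < a).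
  move=> k Hk; rewrite -(nth_traject s Hk d) -(nth_map d false) ?size_traject //.
  rewrite -/(fingraph.orbit s d) E nth_cat size_nseq.
  by case: ifP => H; rewrite nth_nseq ?H //; case: ifP => //; lia.
have gn : g (iter n s d) = true by rewrite (iter_order (@perm_inj _ s)) -[d]/(iter 0 s d) Hg; lia.
exists (iter a.-1 s d), (iter n.-1 s d); split; first split.
- exact: fconnect_iter.
- exact: fconnect_iter.
- by apply/negP => /eqP E1; move: (congr1 g E1); rewrite !Hg //; lia.
- by rewrite /trans -iterS !Hg; lia.
- by rewrite /trans -iterS orderSpred gn Hg; lia.
move=> y dy; rewrite -(iter_findex dy) /trans -iterS.
have := findex_max dy; rewrite -/n => Hy.
case: (ltnP (fidx d y).+1 n) => Hy2.
  rewrite !Hg // => H; left; congr iter; lia.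
by move=> _; right; congr iter; lia.
Qed.

End Orb.


Section Main.
Variables (V D : finType) (alpha sigma : {perm D}) (tail : D -> V)
  (o : D) (s0 s1 : V) (lab : D -> bool) (c : seq D).
Hypothesis alphaK : forall d, alpha (alpha d) = d.
Hypothesis alpha_neq : forall d, alpha d != d.
Hypothesis tail_sigma : forall d, tail (sigma d) = tail d.
Hypothesis tail_conn : forall d d', tail d = tail d' -> fconnect sigma d d'.
Hypothesis conn : forall d d', connect (fun x y => (y == sigma x) || (y == alpha x)) d d'.
Hypothesis G2 : forall d, (lab d == lab (sigma d)) != (lab (alpha d) == lab (sigma (alpha d))).
Hypothesis uniqT : uniq (map tail c).
Hypothesis allX : all (orient alpha sigma lab) c.
Hypothesis cyc : path.cycle (fun d d' => Defs.head alpha tail d == tail d') c.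
Hypothesis c_nil : c != [::].

Local Notation ph := (phi alpha sigma).
Local Notation X := (orient alpha sigma lab).
Local Notation R := (region_adj alpha sigma c).

Definition z d := (d \in c) || (alpha d \in c).

Lemma X_alpha x : X (alpha x) = ~~ X x.
Proof.
move: (G2 x); rewrite /orient alphaK.
by case: (lab x == lab (sigma x)); case: (lab (alpha x) == lab (sigma (alpha x))).
Qed.

Lemma X_c x : x \in c -> X x.
Proof. by move=> xc; move/allP: allX; apply. Qed.

Lemma notboth d : d \in c -> alpha d \in c -> False.
Proof. by move=> /X_c h1 /X_c; rewrite X_alpha h1. Qed.

Lemma z_alpha d : z (alpha d) = z d.
Proof. by rewrite /z alphaK orbC. Qed.

Lemma uniq_c : uniq c.
Proof. exact: map_uniq uniqT. Qed.

Lemma tail_inj_c x x' : x \in c -> x' \in c -> tail x = tail x' -> x = x'.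
Proof.
move: uniqT; elim: c => [//|a s IH] /= /andP [na us].
rewrite !inE => /orP [/eqP ->|xs] /orP [/eqP ->|x's] //.
- by move=> E; move: na; rewrite E map_f.
- by move=> E; move: na; rewrite -E map_f.
- exact: IH.
Qed.

Lemma head_next x : x \in c -> Defs.head alpha tail x = tail (next c x).
Proof. by move=> xc; apply/eqP; apply: (next_cycle cyc xc). Qed.

Lemma head_prev x : x \in c -> Defs.head alpha tail (prev c x) = tail x.
Proof. by move=> xc; apply/eqP; apply: (prev_cycle cyc xc). Qed.

Lemma tail_alpha d : tail (alpha d) = Defs.head alpha tail d.
Proof. by []. Qed.

Definition uof w := alpha (prev c w).

Lemma tail_uof w : w \in c -> tail (uof w) = tail w.
Proof. by move=> wc; rewrite /uof tail_alpha head_prev. Qed.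

Lemma uof_neq w : w \in c -> uof w != w.
Proof.
move=> wc; apply/eqP => E; have := X_c wc; rewrite -E /uof X_alpha.
by rewrite X_c // mem_prev.
Qed.

Lemma X_uof w : w \in c -> X (uof w) = false.
Proof. by move=> wc; rewrite /uof X_alpha X_c // mem_prev. Qed.

Lemma zchar w y : w \in c -> tail y = tail w -> z y = (y == w) || (y == uof w).
Proof.
move=> wc ty; rewrite /z; apply/idP/idP.
  case/orP => [yc|ayc].
    by rewrite (tail_inj_c yc wc ty) eqxx.
  have nc : next c (alpha y) \in c by rewrite mem_next.
  have tn : tail (next c (alpha y)) = tail w by rewrite -head_next // /Defs.head alphaK.
  have := tail_inj_c nc wc tn => E.
  by rewrite /uof -E (prev_next uniq_c) // alphaK eqxx orbT.
by case/orP => /eqP ->; rewrite ?wc //= /uof alphaK mem_prev wc orbT.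
Qed.

Lemma zexists y : z y -> exists2 w, w \in c & tail w = tail y.
Proof.
case/orP => [yc|ayc]; first by exists y.
exists (next c (alpha y)); first by rewrite mem_next.
by rewrite -head_next // /Defs.head alphaK.
Qed.

Lemma parity v : ~~ odd #|[pred d | (tail d == v) && z d]|.
Proof.
case: (pickP [pred d | (tail d == v) && z d]) => [y /andP [/eqP ty zy] | none].
  have [w wc tw] := zexists zy.
  rewrite (@eq_card _ _ (pred2 w (uof w))) ?card2 ?(eq_sym w) ?uof_neq //.
  move=> d; rewrite !inE.
  case: (tail d =P v) => [td|ntd] /=.
    by rewrite (zchar wc) // td -ty tw.
  apply/esym/negbTE; apply/negP => /orP [] /eqP E; apply: ntd; rewrite E -ty -tw //.
  exact: tail_uof.
by rewrite eq_card0.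
Qed.


Lemma R_sym : symmetric R.
Proof.
move=> x y; rewrite /region_adj orbA [(y == _) || _]orbC -orbA; congr (_ || (_ || _)).
apply/andP/andP => [[/eqP -> /andP [h1 h2]]|[/eqP -> /andP [h1 h2]]];
  by rewrite alphaK eqxx ?h1 ?h2; split; rewrite // -?(alphaK x) -?(alphaK y) ?h1 ?h2; apply/andP; split.
Qed.

Lemma R_csym : connect_sym R.
Proof. exact: sym_connect_sym R_sym. Qed.

Lemma R_ph x : connect R x (ph x).
Proof. by apply: connect1; rewrite /region_adj eqxx. Qed.

Lemma R_alpha x : ~~ z x -> connect R x (alpha x).
Proof.
rewrite /z negb_or => /andP [h1 h2]; apply: connect1.
by rewrite /region_adj eqxx h1 h2 !orbT.
Qed.

Lemma R_sigma y : ~~ z y -> connect R y (sigma y).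
Proof.
move=> zy; apply: connect_trans (R_alpha zy) _.
by have := R_ph (alpha y); rewrite /phi alphaK.
Qed.

Lemma fconnect_tail x y : fconnect sigma x y -> tail y = tail x.
Proof.
apply: (connect_to (Q := fun x y => tail y = tail x)) => // a b d /eqP <-.
by rewrite tail_sigma.
Qed.

Lemma arc a b : tail a = tail b -> a != b ->
  (forall y, tail y = tail a -> z y -> y = a \/ y = b) -> connect R (sigma a) b.
Proof.
move=> tab nab hz.
have sab : fconnect sigma (sigma a) b by rewrite fconnect_s; exact: tail_conn.
set m := fingraph.findex sigma (sigma a) b.
have mlt : m < fingraph.order sigma (sigma a) by exact: findex_max.
have posa : fingraph.findex sigma (sigma a) a = (fingraph.order sigma (sigma a)).-1.
  by rewrite -{2}[a](permK sigma) fidx_inv.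
suff H : forall j, j <= m -> connect R (sigma a) (iter j sigma (sigma a)).
  by rewrite -(iter_findex sab) H.
elim => [//|j IH] Hj; rewrite iterS.
have Hj' : j < fingraph.order sigma (sigma a) by clear -Hj mlt; lia.
have ny : iter j sigma (sigma a) != a.
  apply/eqP => E; move: (findex_iter Hj'); rewrite E posa; clear -Hj mlt; lia.
have nb : iter j sigma (sigma a) != b.
  apply/eqP => E; move: (findex_iter Hj'); rewrite E -/m; clear -Hj; lia.
have nz : ~~ z (iter j sigma (sigma a)).
  apply/negP => /hz [].
  - rewrite (fconnect_tail (fconnect_iter _ _ _)) tail_sigma //.
  - by move/eqP; rewrite (negbTE ny).
  - by move/eqP; rewrite (negbTE nb).
apply: connect_trans (IH _) (R_sigma nz); clear -Hj; lia.
Qed.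

Lemma c_conn x : x \in c -> connect R x (next c x).
Proof.
move=> xc; set w := next c x.
have wc : w \in c by rewrite mem_next.
have ux : uof w = alpha x by rewrite /uof /w (prev_next uniq_c).
apply: connect_trans (R_ph x) _; rewrite /phi -ux.
apply: arc; first by rewrite tail_uof.
  exact: uof_neq.
move=> y ty zy; rewrite (zchar wc) in zy; last by rewrite ty tail_uof.
by case/orP: zy => /eqP ->; [right|left].
Qed.

Lemma c_conn' x : x \in c -> connect R (alpha (next c x)) (alpha x).
Proof.
move=> xc; set w := next c x.
have wc : w \in c by rewrite mem_next.
have ux : uof w = alpha x by rewrite /uof /w (prev_next uniq_c).
apply: connect_trans (R_ph (alpha w)) _; rewrite /phi alphaK -ux.
apply: arc; first by rewrite tail_uof.
  by rewrite eq_sym uof_neq.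
move=> y ty zy; rewrite (zchar wc) in zy; last by rewrite ty.
by case/orP: zy => /eqP ->; [left|right].
Qed.

Lemma connect_idem (e : rel D) x y : connect (connect e) x y -> connect e x y.
Proof.
apply: (connect_to (Q := connect e)) => // a b d h1 h2; exact: connect_trans h1 h2.
Qed.

Lemma all_c x y : x \in c -> y \in c -> connect R x y.
Proof.
move=> xc yc; apply: connect_idem.
have cy : path.cycle (fun a b => connect R a b) c.
  by apply: (cycle_from_next uniq_c) => a ac; exact: c_conn.
exact: (connect_cycle cy).
Qed.

Lemma all_c' x y : x \in c -> y \in c -> connect R (alpha x) (alpha y).
Proof.
move=> xc yc.
have cy : path.cycle (fun a b => connect R (alpha b) (alpha a)) c.
  by apply: (cycle_from_next uniq_c) => a ac; exact: c_conn'.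
have := connect_cycle cy yc xc.
apply: (connect_to (Q := fun a b => connect R (alpha b) (alpha a))) => // a b d h1 h2.
exact: connect_trans h2 h1.
Qed.

Lemma c0_ex : exists c0, c0 \in c.
Proof. by case: c c_nil => [//|c0 s] _; exists c0; rewrite inE eqxx. Qed.

Lemma reach x : exists2 a, z a & connect R x a.
Proof.
have [c0 c0c] := c0_ex.
suff H : (exists2 a, z a & connect R c0 a) -> exists2 a, z a & connect R x a.
  by apply: H; exists c0; rewrite /z ?c0c.
move: (conn x c0).
apply: (connect_to (Q := fun x y => (exists2 a, z a & connect R y a) -> exists2 a, z a & connect R x a)).
  by [].
move=> a b d /orP [] /eqP -> H1 H2; have [a' za' ca'] := H1 H2.
  case: (boolP (z a)) => za; first by exists a.
  by exists a' => //; exact: connect_trans (R_sigma za) ca'.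
case: (boolP (z a)) => za; first by exists a.
by exists a' => //; exact: connect_trans (R_alpha za) ca'.
Qed.

Variable P : D -> bool.
Hypothesis Pph : forall d, P (ph d) = P d.
Hypothesis Pal : forall d, P (alpha d) = P d (+) z d.

Lemma R_P x y : connect R x y -> P x = P y.
Proof.
apply: (connect_to (Q := fun x y => P x = P y)) => // a b d.
rewrite /region_adj => /or3P [/eqP|/eqP|/and3P [/eqP Eb h1 h2]].
- by move=> -> <-; rewrite Pph.
- by move=> -> <-; rewrite Pph.
move=> <-; rewrite Eb Pal /z (negbTE h1).
by rewrite /= -Eb (negbTE h2) addbF.
Qed.

Lemma to_c0 c0 x : c0 \in c -> connect R x c0 \/ connect R x (alpha c0).
Proof.
move=> c0c; have [a za xa] := reach x.
case/orP: za => [ac|aac].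
  by left; apply: connect_trans xa (all_c ac c0c).
right; apply: connect_trans xa _; have := all_c' aac c0c; by rewrite alphaK.
Qed.

Lemma inside_char x : inside alpha sigma o c x = (P x != P o).
Proof.
rewrite /inside; case: (boolP (connect R x o)) => [xo|nxo].
  by rewrite (R_P xo) eqxx.
apply/esym/negP => /eqP E; apply/negP: nxo; rewrite negbK.
have [c0 c0c] := c0_ex.
have Pc0 : P (alpha c0) = ~~ P c0 by rewrite Pal /z c0c addbT.
have sym := R_csym.
case: (to_c0 x c0c) => hx; case: (to_c0 o c0c) => ho.
- by apply: connect_trans hx _; rewrite sym.
- by move: E; rewrite (R_P hx) (R_P ho) Pc0; case: (P c0).
- by move: E; rewrite (R_P hx) (R_P ho) Pc0; case: (P c0).
- by apply: connect_trans hx _; rewrite sym.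
Qed.

Definition q x := P x (+) P o.
Local Notation lab' := (complement_inside alpha sigma o c lab).

Lemma lab'E x : lab' x = lab x (+) q x.
Proof.
by rewrite /complement_inside inside_char /q; case: (P x); case: (P o); case: (lab x).
Qed.

Lemma q_ph x : q (ph x) = q x.
Proof. by rewrite /q Pph. Qed.

Lemma q_alpha x : q (alpha x) = q x (+) z x.
Proof. by rewrite /q Pal -!addbA [z x (+) _]addbC. Qed.

Lemma q_sigma x : q (sigma x) = q x (+) z x.
Proof. have -> : sigma x = ph (alpha x) by rewrite /phi alphaK.
by rewrite q_ph q_alpha. Qed.

Lemma orient' d : orient alpha sigma lab' d = X d (+) z d.
Proof.
rewrite /orient !lab'E q_sigma q_alpha z_alpha.
by case: (lab (alpha d)); case: (lab (sigma (alpha d))); case: (q d); case: (z d).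
Qed.

Lemma rev_ok d : orient alpha sigma lab' d = reverse_on alpha X c d.
Proof.
rewrite orient' /reverse_on /z; case: ifP => [dc|ndc] /=.
  by rewrite X_c.
case: ifP => [adc|nadc] /=.
  by have := X_c adc; rewrite X_alpha; case: (X d).
by rewrite addbF.
Qed.

Lemma G2' d : (lab' d == lab' (sigma d)) != (lab' (alpha d) == lab' (sigma (alpha d))).
Proof.
have := G2 d; rewrite -!/(orient alpha sigma _ d) orient'.
rewrite !lab'E q_sigma.
by case: (lab d); case: (lab (sigma d)); case: (q d); case: (z d); case: (X d).
Qed.

Lemma q_face x y : fconnect ph x y -> q x = q y.
Proof.
apply: (connect_to (Q := fun x y => q x = q y)) => // a b d /eqP <- <-.
by rewrite q_ph.
Qed.

Lemma q_at (v : V) e y : (forall y, tail y = v -> ~~ z y) -> tail e = v -> tail y = v -> q e = q y.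
Proof.
move=> nz te ty; have H := tail_conn (etrans te (esym ty)); move: H te.
apply: (connect_to (Q := fun x y => tail x = v -> q x = q y)) => // a b d /eqP <- H ta.
by rewrite -H ?tail_sigma // q_sigma (negbTE (nz _ ta)) addbF.
Qed.

Lemma trX y : trans sigma lab y = X y.
Proof.
move: (G2 y); rewrite /trans -/(orient alpha sigma lab y).
by case: (lab y == lab (sigma y)); case: (X y).
Qed.

Lemma trX' y : trans sigma lab' y = X y (+) z y.
Proof.
rewrite /trans !lab'E q_sigma -trX /trans.
by case: (lab y); case: (lab (sigma y)); case: (q y); case: (z y).
Qed.

Hypothesis G1 : forall v, v != s0 -> v != s1 -> exists d, tail d = v /\ blockf sigma lab d.

Lemma G1' v : v != s0 -> v != s1 -> exists d, tail d = v /\ blockf sigma lab' d.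
Proof.
move=> n0 n1; have [d [td bd]] := G1 n0 n1.
have [y1 [y2 [[dy1 dy2 n12 t1 t2] hy]]] := extract bd.
have atv y : fconnect sigma d y = (tail y == v).
  apply/idP/idP => [/fconnect_tail -> | /eqP ty]; first by rewrite td.
  by apply: tail_conn; rewrite td ty.
suff [d' [dd' bd']] : exists d', fconnect sigma d d' /\ blockf sigma lab' d'.
  by exists d'; split => //; apply/eqP; rewrite -atv.
case: (boolP [exists y, (tail y == v) && z y]) => [/existsP [y /andP [/eqP ty zy]] | /existsPn nz].
  have [w wc tw] := zexists zy.
  have tw' : tail w = v by rewrite tw.
  have hw : X w := X_c wc.
  have hu : X (uof w) = false := X_uof wc.
  have zc y' : tail y' = v -> z y' = (y' == w) || (y' == uof w).
    by move=> ty'; apply: zchar; rewrite ?ty' ?tw'.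
  have dw : fconnect sigma d w by rewrite atv tw'.
  have du : fconnect sigma d (uof w) by rewrite atv tail_uof ?tw'.
  have wy : w = y1 \/ w = y2 by apply: hy; rewrite ?trX.
  pose o' := if w == y1 then y2 else y1.
  have do' : fconnect sigma d o' by rewrite /o'; case: ifP.
  have to' : trans sigma lab o' by rewrite /o'; case: ifP.
  have o'w : o' != w.
    rewrite /o'; case: ifP => [/eqP ->|/negbT]; first by rewrite eq_sym.
    by rewrite eq_sym.
  have o'u : o' != uof w by apply/eqP => E; move: to'; rewrite E trX hu.
  have to'' : tail o' = v by apply/eqP; rewrite -atv.
  apply: (build (y1 := o') (y2 := uof w)) => //.
  - by rewrite trX' (zc _ to'') (negbTE o'w) (negbTE o'u) addbF -trX.
  - by rewrite trX' (zc _ (etrans (tail_uof wc) tw')) hu eqxx orbT.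
  move=> y' dy' ty''; have tyv : tail y' = v by apply/eqP; rewrite -atv.
  move: ty''; rewrite trX' (zc _ tyv).
  case: (y' =P w) => [Ew|nw]; first by rewrite Ew hw.
  case: (y' =P uof w) => [->|nu]; first by right.
  rewrite addbF -trX => /(hy _ dy') [] E.
    left; rewrite /o' ifN_eq ?E //; apply/eqP => Ew; apply: nw; by rewrite E Ew.
  left; case: wy => Ew; first by rewrite /o' Ew eqxx E.
  by exfalso; apply: nw; rewrite E Ew.
apply: (build (y1 := y1) (y2 := y2)) => //.
- by rewrite trX' -trX t1; move: (nz y1); rewrite negb_and -atv dy1 /= => /negbTE ->.
- by rewrite trX' -trX t2; move: (nz y2); rewrite negb_and -atv dy2 /= => /negbTE ->.
move=> y' dy'; rewrite trX'; move: (nz y'); rewrite negb_and -atv dy' /= => /negbTE ->.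
by rewrite addbF -trX; apply: hy.
Qed.

Hypothesis on0 : on_face alpha sigma tail o s0.
Hypothesis on1 : on_face alpha sigma tail o s1.
Hypothesis G0a : forall d, tail d = s0 -> lab d = false.
Hypothesis G0b : forall d, tail d = s1 -> lab d = true.

Lemma nz_s0 y : tail y = s0 -> ~~ z y.
Proof.
move=> ty; apply/negP => zy; have [w wc tw] := zexists zy.
have ts : tail w = s0 by rewrite tw.
have := G2 w; rewrite -/(orient alpha sigma lab w) X_c // (G0a ts) (G0a (etrans (tail_sigma w) ts)).
by [].
Qed.

Lemma nz_s1 y : tail y = s1 -> ~~ z y.
Proof.
move=> ty; apply/negP => zy; have [w wc tw] := zexists zy.
have ts : tail w = s1 by rewrite tw.
have := G2 w; rewrite -/(orient alpha sigma lab w) X_c // (G0b ts) (G0b (etrans (tail_sigma w) ts)).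
by [].
Qed.

Lemma q_o : q o = false.
Proof. by rewrite /q addbb. Qed.

Lemma q_s0 d : tail d = s0 -> q d = false.
Proof.
move=> td; move/existsP: on0 => [e /andP [oe /eqP te]].
rewrite -(q_at (v := s0) (e := e)) //; last exact: nz_s0.
by rewrite -(q_face oe) q_o.
Qed.

Lemma q_s1 d : tail d = s1 -> q d = false.
Proof.
move=> td; move/existsP: on1 => [e /andP [oe /eqP te]].
rewrite -(q_at (v := s1) (e := e)) //; last exact: nz_s1.
by rewrite -(q_face oe) q_o.
Qed.

Lemma G0a' d : tail d = s0 -> lab' d = false.
Proof. by move=> td; rewrite lab'E q_s0 // G0a. Qed.

Lemma G0b' d : tail d = s1 -> lab' d = true.
Proof. by move=> td; rewrite lab'E q_s1 // G0b. Qed.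

Hypothesis faces : forall d, fingraph.order ph d = 4.
Hypothesis G3in : forall d, ~~ fconnect ph o d -> exists e, fconnect ph d e /\
          map lab (fingraph.orbit ph e) = [:: false; false; true; true].

Lemma G3in' d : ~~ fconnect ph o d -> exists e, fconnect ph d e /\
          map lab' (fingraph.orbit ph e) = [:: false; false; true; true].
Proof.
move=> nod; have [e [de E]] := G3in nod.
move: E; rewrite /fingraph.orbit faces /= => [[l0 l1 l2 l3]].
have e4 : ph (ph (ph (ph e))) = e.
  by have := iter_order (ph_inj (alpha := alpha) (sigma := sigma)) e; rewrite faces.
case qe: (q e).
  exists (ph (ph e)); split.
    by apply: connect_trans de _; exact: (fconnect_iter ph 2 e).
  rewrite /fingraph.orbit faces /= !lab'E e4 !q_ph qe l0 l1 l2 l3.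
  by [].
exists e; split => //.
rewrite /fingraph.orbit faces /= !lab'E !q_ph qe l0 l1 l2 l3.
done.
Qed.

Lemma ph_phiinv a : ph (phiinv alpha sigma a) = a.
Proof. by rewrite /phi /phiinv alphaK permKV. Qed.

Lemma G3out' (G3out : forall e, fconnect ph o e -> tail e = s0 ->
          map lab (fingraph.orbit (phiinv alpha sigma) e) = [:: false; false; true; true]) :
  forall e, fconnect ph o e -> tail e = s0 ->
          map lab' (fingraph.orbit (phiinv alpha sigma) e) = [:: false; false; true; true].
Proof.
move=> e oe te; rewrite -(G3out e oe te); apply/eq_in_map => y.
rewrite -fconnect_orbit => ey; rewrite lab'E.
suff -> : q y = false by rewrite addbF.
move: ey; have : q e = false by rewrite -(q_face oe) q_o.
move=> qe ey; rewrite -qe; apply/esym.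
move: ey; apply: (connect_to (Q := fun x y => q x = q y)) => // a b d /eqP <- <-.
by rewrite -{1}(ph_phiinv a) q_ph.
Qed.

End Main.


Theorem lemma25 (V D : finType) (alpha sigma : {perm D}) (tail : D -> V)
  (o : D) (black : V -> bool) (s0 s1 : V) (lab : D -> bool) (c : seq D) :
  plane_quadrangulation alpha sigma tail ->
  proper_bicoloring alpha tail black ->
  strong_labeling alpha sigma tail black o s0 s1 lab ->
  directed_cycle alpha tail (orient alpha sigma lab) c ->
  strong_labeling alpha sigma tail black o s0 s1
    (complement_inside alpha sigma o c lab) /\
  (forall d, orient alpha sigma (complement_inside alpha sigma o c lab) d =
             reverse_on alpha (orient alpha sigma lab) c d).
Proof.
move=> [[Ha tail_sigma tail_conn tail_surj] _ conn euler [Hfaces _]] _.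
move=> [Hfirst [G0a G0b] G1 G2 [G3in G3out]] [size3 uniqT allX cyc].
have alphaK d : alpha (alpha d) = d := (Ha d).1.
have alpha_neq d : alpha d != d := (Ha d).2.
have c_nil : c != [::] by case: (c) size3.
have faces d : fingraph.order (phi alpha sigma) d = 4 := (Hfaces d).1.
have G1b : forall v, v != s0 -> v != s1 -> exists d, tail d = v /\ blockf sigma lab d.
  exact: G1.
have [on0 on1] : on_face alpha sigma tail o s0 /\ on_face alpha sigma tail o s1.
  by case: Hfirst.
have zA := z_alpha c alphaK.
have zE := parity alphaK G2 uniqT allX cyc.
have [P [Pph Pal]] := potential alphaK alpha_neq tail_sigma tail_surj conn euler zA zE.
have H := (alphaK, tail_sigma, tail_conn, conn, G2).
split; first split => //.
- by split => d; [apply: (G0a' alphaK tail_sigma tail_conn conn G2 uniqT allX cyc c_nil Pph Pal on0 G0a)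
                 |apply: (G0b' alphaK tail_sigma tail_conn conn G2 uniqT allX cyc c_nil Pph Pal on1 G0b)].
- by move=> v n0 n1; apply: (G1' o alphaK tail_sigma tail_conn conn G2 uniqT allX cyc c_nil Pph Pal G1b).
- by move=> d; apply: (G2' o alphaK tail_sigma tail_conn conn G2 uniqT allX cyc c_nil Pph Pal).
- split.
    by move=> d; apply: (G3in' alphaK tail_sigma tail_conn conn G2 uniqT allX cyc c_nil Pph Pal faces G3in).
  by apply: (G3out' alphaK tail_sigma tail_conn conn G2 uniqT allX cyc c_nil Pph Pal G3out).
by move=> d; apply: (rev_ok o alphaK tail_sigma tail_conn conn G2 uniqT allX cyc c_nil Pph Pal).
Qed.
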